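(* Let $(G,r,k,c,\pi)$ be an instance of $k$-PCST with optimal value $\mathrm{OPT}$. Suppose there exists an optimal solution $F^{\star}=(V^{\star},E^{\star})$ of this instance with $\sum_{e\in E^{\star}}c(e)\le \mathrm{OPT}/2$. Then the output $F_{\mathrm{OUT}}=(V_{\mathrm{OUT}},E_{\mathrm{OUT}})$ of the algorithm $\mathcal{A}$ described below satisfies \[ \sum_{e\in E_{\mathrm{OUT}}}c(e)+\sum_{v\notin V_{\mathrm{OUT}}}\pi(v)\le 3\,\mathrm{OPT}. \]
   Context: An instance of $k$-PCST consists of an undirected connected graph $G=(V,E)$, a root $r\in V$, an integer $k$, a nonnegative edge cost $c:E\to\mathbb{R}_+$ and a nonnegative penalty $\pi:V\to\mathbb{R}_+$. A feasible solution is a subtree $F=(V_F,E_F)$ of $G$ with $r\in V_F$ and $|V_F|\ge k$, of cost $\sum_{e\in E_F}c(e)+\sum_{v\in V\setminus V_F}\pi(v)$; $\mathrm{OPT}$ is the minimum cost. The PCST instance $(G,r,c,\pi)$ is the same problem without the constraint $|V_F|\ge k$; the rooted $k$-MST instance $(G,r,k,c)$ asks for a subtree containing $r$ with at least $k$ vertices minimizing total edge cost. Procedure 1 is the Goemans–Williamson primal-dual algorithm for PCST, which returns a subtree $F=(V_F,E_F)$ containing $r$ whose PCST cost is at most $2$ times the optimal PCST value. Procedure 2 is Garg's primal-dual algorithm for rooted $k$-MST, which returns a subtree containing $r$ with at least $k$ vertices whose edge cost is at most $2$ times the optimal rooted $k$-MST value. Algorithm $\mathcal{A}$: Step 1: apply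 Procedure 1 to $(G,r,c,\pi)$ obtaining $F_{\mathrm{PCST}}=(V_{\mathrm{PCST}},E_{\mathrm{PCST}})$; if $|V_{\mathrm{PCST}}|\ge k$, return $F_{\mathrm{PCST}}$; otherwise go to Step 2. Step 2: apply Procedure 2 to $(G,r,k,c)$ obtaining $F_{k\text{-MST}}=(V_{k\text{-MST}},E_{k\text{-MST}})$. Step 3: form the graph $G'=(V_{\mathrm{PCST}}\cup V_{k\text{-MST}},E_{\mathrm{PCST}}\cup E_{k\text{-MST}})$, compute a minimum spanning tree $F_{\mathrm{OUT}}$ of $G'$ with respect to $c$, and return it. *)

(* Defs.v *)
From mathcomp Require Import all_boot all_order all_algebra.
Set Implicit Arguments. Unset Strict Implicit. Unset Printing Implicit Defensive.
Import Order.TTheory GRing.Theory Num.Theory.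
Local Open Scope ring_scope.

Section KPCST.
Variable V : finType.   (* vertex set of G is the whole finite type V *)

(* A subgraph is a pair (vertex set, edge set); an edge is a 2-element set of vertices. *)
Definition subgraph := ({set V} * {set {set V}})%type.

Definition is_edge_set (E : {set {set V}}) : Prop :=
  forall e, e \in E -> #|e| = 2%N.

Definition edge_rel (E : {set {set V}}) : rel V := fun x y => [set x; y] \in E.

Definition connected_on (W : {set V}) (E : {set {set V}}) : Prop :=
  forall x y, x \in W -> y \in W -> connect (edge_rel E) x y.

Definition is_subgraph_of (W : {set V}) (E : {set {set V}}) (F : subgraph) : Prop :=
  [/\ F.1 \subset W, F.2 \subset E & forall e, e \in F.2 -> e \subset F.1].

(* F is a tree: connected, nonempty, with |E_F| = |V_F| - 1 *)
Definition is_tree (F : subgraph) : Prop :=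
  connected_on F.1 F.2 /\ #|F.2|.+1 = #|F.1|.

Definition rooted_subtree (E : {set {set V}}) (r : V) (F : subgraph) : Prop :=
  [/\ is_subgraph_of [set: V] E F, is_tree F & r \in F.1].

Variable R : realFieldType.

Definition edge_cost (c : {set V} -> R) (F : subgraph) : R :=
  \sum_(e in F.2) c e.

Definition penalty (pi : V -> R) (F : subgraph) : R :=
  \sum_(v in ~: F.1) pi v.

Definition pcst_cost (c : {set V} -> R) (pi : V -> R) (F : subgraph) : R :=
  edge_cost c F + penalty pi F.

(* feasible solutions of k-PCST (equivalently of rooted k-MST) *)
Definition kpcst_feasible (E : {set {set V}}) (r : V) (k : nat) (F : subgraph) : Prop :=
  rooted_subtree E r F /\ (k <= #|F.1|)%N.

Definition kpcst_optimal (E : {set {set V}}) (r : V) (k : nat)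
  (c : {set V} -> R) (pi : V -> R) (F : subgraph) : Prop :=
  kpcst_feasible E r k F /\
  forall F', kpcst_feasible E r k F' -> pcst_cost c pi F <= pcst_cost c pi F'.

(* Specification of Procedure 1 (Goemans--Williamson): a rooted subtree whose
   PCST cost is at most twice the optimal PCST value. *)
Definition pcst_2approx (E : {set {set V}}) (r : V)
  (c : {set V} -> R) (pi : V -> R) (F : subgraph) : Prop :=
  rooted_subtree E r F /\
  forall F', rooted_subtree E r F' -> pcst_cost c pi F <= 2 * pcst_cost c pi F'.

(* Specification of Procedure 2 (Garg): a rooted subtree with at least k vertices
   whose edge cost is at most twice the optimal rooted k-MST value. *)
Definition kmst_2approx (E : {set {set V}}) (r : V) (k : nat)
  (c : {set V} -> R) (F : subgraph) : Prop :=
  kpcst_feasible E r k F /\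
  forall F', kpcst_feasible E r k F' -> edge_cost c F <= 2 * edge_cost c F'.

Definition is_spanning_tree (W : {set V}) (E' : {set {set V}}) (F : subgraph) : Prop :=
  [/\ is_subgraph_of W E' F, F.1 = W & is_tree F].

Definition is_mst (W : {set V}) (E' : {set {set V}}) (c : {set V} -> R)
  (F : subgraph) : Prop :=
  is_spanning_tree W E' F /\
  forall T, is_spanning_tree W E' T -> edge_cost c F <= edge_cost c T.

(* Output of algorithm A, given the outputs FP of Procedure 1 and FK of Procedure 2 *)
Definition algA_output (k : nat) (c : {set V} -> R)
  (FP FK FOUT : subgraph) : Prop :=
  ((k <= #|FP.1|)%N -> FOUT = FP) /\
  ((#|FP.1| < k)%N -> is_mst (FP.1 :|: FK.1) (FP.2 :|: FK.2) c FOUT).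

End KPCST.

(* Main.v *)
Require Import Defs.
From mathcomp Require Import all_boot all_order all_algebra.
From mathcomp Require Import lra.
Set Implicit Arguments. Unset Strict Implicit.
Import Order.TTheory GRing.Theory Num.Theory.
Local Open Scope ring_scope.

Lemma sum_le_union (R : realFieldType) (T : finType) (A B C : {set T}) (f : T -> R) :
  A \subset B :|: C -> (forall e, e \in B :|: C -> 0 <= f e) ->
  \sum_(e in A) f e <= \sum_(e in B) f e + \sum_(e in C) f e.
Proof.
move=> sub hf; rewrite !(big_mkcond (fun e => e \in _)) -big_split /=.
apply: ler_sum => e _.
case: ifP => eA; last first.
  case: ifP => eB; case: ifP => eC; rewrite ?addr0 ?add0r ?lexx //;
  try (apply: hf; rewrite inE ?eB ?eC ?orbT //).
  by rewrite addr_ge0 // hf // inE eB.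
have := subsetP sub e eA; rewrite inE => /orP[] H.
  rewrite H lerDl; case: ifP => // eC; apply: hf; by rewrite inE eC orbT.
rewrite H lerDr; case: ifP => // eB; apply: hf; by rewrite inE eB.
Qed.

Lemma sum_ge0_sub (R : realFieldType) (V : finType) (E : {set {set V}}) (F : {set {set V}})
  (c : {set V} -> R) : F \subset E -> (forall e, e \in E -> 0 <= c e) ->
  0 <= \sum_(e in F) c e.
Proof. move=> s hc; apply: sumr_ge0 => e eF; exact/hc/(subsetP s). Qed.

Theorem proposition1 (R : realFieldType) (V : finType) (E : {set {set V}})
  (r : V) (k : nat) (c : {set V} -> R) (pi : V -> R)
  (hE : is_edge_set E) (hconn : connected_on [set: V] E)
  (hc : forall e, e \in E -> 0 <= c e) (hpi : forall v, 0 <= pi v)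
  (Fstar : subgraph V)
  (hopt : kpcst_optimal E r k c pi Fstar)
  (hsmall : edge_cost c Fstar <= pcst_cost c pi Fstar / 2)
  (FP FK FOUT : subgraph V)
  (hFP : pcst_2approx E r c pi FP)
  (hFK : kmst_2approx E r k c FK)
  (hOUT : algA_output k c FP FK FOUT) :
  pcst_cost c pi FOUT <= 3 * pcst_cost c pi Fstar.
Proof.
case: hopt => hfeas _.
have hst := hfeas; case: hst => [[[_ sE _] _ _] _].
have h0 : 0 <= pcst_cost c pi Fstar.
  apply: addr_ge0; first by rewrite /edge_cost; exact: (sum_ge0_sub sE hc).
  by apply: sumr_ge0 => v _.
case: hFP => [[[_ sEP _] _ _] hP].
have hPs := hP _ hfeas.1.
case: hFK => [[[[_ sEK _] _ _] _] hK].
have hKs := hK _ hfeas.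
case: hOUT => h1 h2.
case: (leqP k #|FP.1|) => hk.
  rewrite (h1 hk); apply: (le_trans hPs); rewrite ler_wpM2r //.
  by rewrite ler_nat.
case: (h2 hk) => [[[_ sO _] eqV _] _].
have hE1 : edge_cost c FOUT <= edge_cost c FP + edge_cost c FK.
  apply: sum_le_union => // e; rewrite inE => /orP[] H; apply: hc.
    exact: (subsetP sEP).
  exact: (subsetP sEK).
have hP1 : penalty pi FOUT <= penalty pi FP.
  rewrite /penalty (big_setID (~: FP.1) (fun v => pi v) ) /=.
  have -> : ~: FOUT.1 :&: ~: FP.1 = ~: FOUT.1.
    apply/setIidPl; rewrite setCS eqV; exact: subsetUl.
  rewrite [X in _ <= X](big_setID (~: FOUT.1)) /=.
  have -> : ~: FP.1 :&: ~: FOUT.1 = ~: FOUT.1.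
    apply/setIidPr; rewrite setCS eqV; exact: subsetUl.
  have -> : ~: FOUT.1 :\: ~: FP.1 = set0.
    apply/eqP; rewrite setD_eq0 setCS eqV; exact: subsetUl.
  rewrite big_set0 addr0 lerDl; by apply: sumr_ge0.
rewrite /pcst_cost.
have hEs : edge_cost c Fstar <= pcst_cost c pi Fstar / 2 := hsmall.
rewrite /pcst_cost in hPs hEs h0 *.
set a := edge_cost c Fstar in hEs hKs hPs h0 *.
set b := penalty pi Fstar in hEs hPs h0 *.
set x := edge_cost c FK in hKs hE1.
set y := edge_cost c FP in hPs hE1.
set z := penalty pi FP in hPs hP1.
set u := edge_cost c FOUT in hE1 *.
set w := penalty pi FOUT in hP1 *.
clearbody a b x y z u w. lra.
Qed.
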